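(* Let $M$ be a free $\mathbb{Z}$-module of rank $2$ with basis $\{a_1, b_1\}$ and skew-symmetric pairing with $\langle a_1, b_1 \rangle = -1$. Let $c_1, c_2, c_3 \in M$ with $c_1 \equiv a_1 + b_1$, $c_2 \equiv b_1$ and $c_3 \equiv a_1 \pmod{2M}$, and let $n \geq 1$. Then the closed subgroup of $\mathrm{Sp}(M \otimes \mathbb{Z}_2)$ topologically generated by $T_{c_1}^{2^n}, T_{c_2}^{2^n}, T_{c_3}^{2^n}$ coincides with $\Gamma(2^{n})$.
   Context: For $c \in M$, $T_c$ is the transvection $v \mapsto v + \langle v, c\rangle c$ on $M\otimes\mathbb{Z}_2$. $\Gamma(N) = \{\sigma \in \mathrm{Sp}(M\otimes\mathbb{Z}_2) : \sigma \equiv 1 \pmod N\}$. *)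

(* Defs.v *)
From HB Require Import structures.
From mathcomp Require Import all_boot all_order all_algebra.
From mathcomp Require Import boolp.
Set Implicit Arguments. Unset Strict Implicit. Unset Printing Implicit Defensive.
Import Order.TTheory GRing.Theory Num.Theory.
Local Open Scope ring_scope.

(* The ring Z_2 of 2-adic integers, as the inverse limit of Z/2^k Z:         *)
(* a 2-adic integer is a sequence (x_k)_k of integers with 0 <= x_k < 2^k    *)
(* and x_{k+1} = x_k mod 2^k (x_k is the residue of x modulo 2^k).           *)

Definition pow2 (k : nat) : int := (2 ^+ k)%R.

Definition Z2 := {x : nat -> int | forall k, (x k.+1 %% pow2 k)%Z = x k}.

Definition z2seq (x : Z2) : nat -> int := proj1_sig x.

HB.instance Definition _ := gen_eqMixin Z2.
HB.instance Definition _ := gen_choiceMixin Z2.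

Lemma z2_eq (x y : Z2) : (forall k, z2seq x k = z2seq y k) -> x = y.
Proof.
case: x => x Hx; case: y => y Hy /= E.
have exy : x = y by apply: funext.
subst y; congr exist; exact: Prop_irrelevance.
Qed.

Lemma modz_pow2S (m : int) k : ((m %% pow2 k.+1)%Z %% pow2 k)%Z = (m %% pow2 k)%Z.
Proof.
rewrite {2}(divz_eq m (pow2 k.+1)) /pow2 exprS mulrA.
by rewrite modzMDl.
Qed.

Lemma z2_reduce_compat (f : nat -> int)
  (Hf : forall k, (f k.+1 = f k %[mod pow2 k])%Z) :
  forall k, ((f k.+1 %% pow2 k.+1)%Z %% pow2 k)%Z = (f k %% pow2 k)%Z.
Proof. by move=> k; rewrite modz_pow2S Hf. Qed.

Definition z2_of (f : nat -> int)
  (Hf : forall k, (f k.+1 = f k %[mod pow2 k])%Z) : Z2 :=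
  exist _ (fun k => (f k %% pow2 k)%Z) (z2_reduce_compat Hf).

Lemma z2seq_of f Hf k : z2seq (@z2_of f Hf) k = (f k %% pow2 k)%Z.
Proof. by []. Qed.

Lemma z2_compat (x : Z2) k : (z2seq x k.+1 %% pow2 k)%Z = z2seq x k.
Proof. exact: (proj2_sig x). Qed.

Lemma z2_modE (x : Z2) k : (z2seq x k %% pow2 k)%Z = z2seq x k.
Proof. by rewrite -z2_compat modz_mod. Qed.

Fact z2_zero_compat k : ((0 : int) = 0 %[mod pow2 k])%Z.
Proof. by []. Qed.
Definition z2_zero : Z2 := z2_of z2_zero_compat.

Fact z2_one_compat k : ((1 : int) = 1 %[mod pow2 k])%Z.
Proof. by []. Qed.
Definition z2_one : Z2 := z2_of z2_one_compat.

Fact z2_add_compat (x y : Z2) k :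
  (z2seq x k.+1 + z2seq y k.+1 = z2seq x k + z2seq y k %[mod pow2 k])%Z.
Proof. by rewrite -(z2_compat x k) -(z2_compat y k) modzDm. Qed.
Definition z2_add (x y : Z2) : Z2 := z2_of (z2_add_compat x y).

Fact z2_opp_compat (x : Z2) k :
  (- z2seq x k.+1 = - z2seq x k %[mod pow2 k])%Z.
Proof. by rewrite -(z2_compat x k) modzNm. Qed.
Definition z2_opp (x : Z2) : Z2 := z2_of (z2_opp_compat x).

Fact z2_mul_compat (x y : Z2) k :
  (z2seq x k.+1 * z2seq y k.+1 = z2seq x k * z2seq y k %[mod pow2 k])%Z.
Proof. by rewrite -(z2_compat x k) -(z2_compat y k) modzMm. Qed.
Definition z2_mul (x y : Z2) : Z2 := z2_of (z2_mul_compat x y).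

Fact z2_addA : associative z2_add.
Proof.
move=> x y z; apply: z2_eq => k; rewrite !z2seq_of.
by rewrite modzDml modzDmr addrA.
Qed.

Fact z2_addC : commutative z2_add.
Proof. by move=> x y; apply: z2_eq => k; rewrite !z2seq_of addrC. Qed.

Fact z2_add0 : left_id z2_zero z2_add.
Proof.
by move=> x; apply: z2_eq => k; rewrite !z2seq_of mod0z add0r z2_modE.
Qed.

Fact z2_addN : left_inverse z2_zero z2_opp z2_add.
Proof.
move=> x; apply: z2_eq => k; rewrite !z2seq_of.
by rewrite modzDml addNr.
Qed.

HB.instance Definition _ := GRing.isZmodule.Build Z2 z2_addA z2_addC z2_add0 z2_addN.

Fact z2_mulA : associative z2_mul.
Proof.
move=> x y z; apply: z2_eq => k; rewrite !z2seq_of.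
by rewrite modzMml modzMmr mulrA.
Qed.

Fact z2_mulC : commutative z2_mul.
Proof. by move=> x y; apply: z2_eq => k; rewrite !z2seq_of mulrC. Qed.

Fact z2_mul1 : left_id z2_one z2_mul.
Proof.
by move=> x; apply: z2_eq => k; rewrite !z2seq_of modzMml mul1r z2_modE.
Qed.

Fact z2_mulDl : left_distributive z2_mul z2_add.
Proof.
move=> x y z; apply: z2_eq => k; rewrite !z2seq_of.
by rewrite modzMml modzDm mulrDl.
Qed.

Fact z2_one_neq0 : z2_one != z2_zero.
Proof.
apply/eqP => /(congr1 (fun x => z2seq x 1)); rewrite !z2seq_of /pow2.
by rewrite expr1 modz_small.
Qed.

HB.instance Definition _ :=
  GRing.Zmodule_isComNzRing.Build Z2 z2_mulA z2_mulC z2_mul1 z2_mulDl z2_one_neq0.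

(* The lattice M = Z a_1 + Z b_1, realised as row vectors 'rV[int]_2 with    *)
(* a_1 = (1,0), b_1 = (0,1), and M (x) Z_2 = 'rV[Z2]_2.  Matrices act on the *)
(* right of row vectors: v |-> v *m sigma.                                   *)

Definition a1 : 'rV[int]_2 := \row_(j < 2) (if j == 0 then 1 else 0).
Definition b1 : 'rV[int]_2 := \row_(j < 2) (if j == 0 then 0 else 1).

Definition pairing (v w : 'rV[Z2]_2) : Z2 := v 0 1 * w 0 0 - v 0 0 * w 0 1.

Definition toZ2 (c : 'rV[int]_2) : 'rV[Z2]_2 := map_mx (fun z : int => z%:~R) c.

Definition Sp (s : 'M[Z2]_2) : Prop :=
  (exists t : 'M[Z2]_2, s * t = 1 /\ t * s = 1) /\ forall v w : 'rV[Z2]_2, pairing (v *m s) (w *m s) = pairing v w.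

Definition congr_mx (N : nat) (A B : 'M[Z2]_2) : Prop :=
  exists t : 'M[Z2]_2, A = B + N%:R *: t.

Definition Gamma (N : nat) (s : 'M[Z2]_2) : Prop := Sp s /\ congr_mx N s 1.

Definition transvection (c : 'rV[int]_2) : 'M[Z2]_2 :=
  lin1_mx (fun v : 'rV[Z2]_2 => v + pairing v (toZ2 c) *: toZ2 c).

Definition is_subgroup (P : 'M[Z2]_2 -> Prop) : Prop :=
  [/\ forall s, P s -> Sp s,
      P 1,
      forall s t, P s -> P t -> P (s * t)
    & forall s t, P s -> s * t = 1 -> P t].

(* closedness for the 2-adic (congruence) topology on matrices over Z_2,
   whose basic neighbourhoods of s are {t | t = s mod 2^k}, k : nat *)
Definition is_closed (P : 'M[Z2]_2 -> Prop) : Prop :=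
  forall s, (forall k : nat, exists2 t, P t & congr_mx (2 ^ k) s t) -> P s.

Definition top_generated (S : 'M[Z2]_2 -> Prop) (s : 'M[Z2]_2) : Prop :=
  forall P, is_subgroup P -> is_closed P -> (forall t, S t -> P t) -> P s.

(* Main.v *)
Require Import Defs.
From HB Require Import structures.
From mathcomp Require Import all_boot all_order all_algebra.
From mathcomp Require Import ring zify.
Import Order.TTheory GRing.Theory Num.Theory.
Local Open Scope ring_scope.

Lemma z2seqD (x y : Z2) k : z2seq (x + y) k = ((z2seq x k + z2seq y k) %% pow2 k)%Z.
Proof. by []. Qed.
Lemma z2seqM (x y : Z2) k : z2seq (x * y) k = ((z2seq x k * z2seq y k) %% pow2 k)%Z.
Proof. by []. Qed.
Lemma z2seq1 k : z2seq 1 k = (1 %% pow2 k)%Z.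
Proof. by []. Qed.
Lemma z2seq0 k : z2seq 0 k = 0.
Proof. by rewrite /= mod0z. Qed.

Lemma pow2_neq0 k : pow2 k != 0.
Proof. by rewrite /pow2 expf_neq0. Qed.

Lemma pow2_nat k : pow2 k = (2 ^ k)%N%:Z.
Proof. by rewrite /pow2 -natz natrX. Qed.

Lemma z2seq_nat (n : nat) k : z2seq (n%:R) k = ((n : int) %% pow2 k)%Z.
Proof.
elim: n => [|n IH]; first by rewrite z2seq0 mod0z.
by rewrite mulrS z2seqD z2seq1 IH modzDm.
Qed.

Lemma modz_pow2_le (m : int) (i j : nat) : ((m %% pow2 (i + j)%N)%Z %% pow2 i)%Z = (m %% pow2 i)%Z.
Proof.
elim: j m => [|j IH] m; first by rewrite addn0 modz_mod.
by rewrite addnS -(IH (m %% _)%Z) modz_pow2S IH.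
Qed.

Lemma z2seq_chain (x : Z2) (i j : nat) : (z2seq x (i + j)%N %% pow2 i)%Z = z2seq x i.
Proof.
elim: j => [|j IH]; first by rewrite addn0 z2_modE.
by rewrite addnS -(modz_pow2_le _ i j) z2_compat IH.
Qed.

Lemma Z0 (x : Z2) : (forall k, exists y, x = (2 ^ k)%N%:R * y) -> x = 0.
Proof.
move=> H; apply: z2_eq => k; have [y ->] := H k.
by rewrite z2seqM z2seq_nat z2seq0 -pow2_nat modzz mul0r mod0z.
Qed.

Lemma cancel2 (z : Z2) : 2 * z = 0 -> z = 0.
Proof.
move=> H; apply: z2_eq => k; rewrite z2seq0.
have := congr1 (fun x => z2seq x k.+1) H; rewrite z2seqM z2seq_nat z2seq0.
rewrite modzMml => /dvdz_mod0P.
rewrite /pow2 exprS dvdz_mul2l // => /dvdz_mod0P.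
by rewrite z2_compat.
Qed.

Lemma cancel2X m (z : Z2) : 2 ^+ m * z = 0 -> z = 0.
Proof.
elim: m z => [|m IH] z; first by rewrite mul1r.
by rewrite exprS -mulrA => /cancel2 /IH.
Qed.

Definition half_f (x : Z2) k : int := (z2seq x k.+1 %/ 2)%Z.
Lemma half_compat (x : Z2) k : (half_f x k.+1 = half_f x k %[mod pow2 k])%Z.
Proof.
rewrite /half_f.
rewrite [z2seq x k.+2](divz_eq _ (pow2 k.+1)) z2_compat.
rewrite /pow2 exprSr mulrA divzMDl // modzMDl //.
Qed.
Definition half (x : Z2) : Z2 := z2_of (half_compat x).

Lemma z2seq_bit (x : Z2) : z2seq x 1 = 0 \/ z2seq x 1 = 1.
Proof.
have h0 := modz_ge0 (z2seq x 1) (pow2_neq0 1).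
have h1 := ltz_pmod (z2seq x 1) (isT : 0 < pow2 1).
rewrite z2_modE in h0 h1; move: h0 h1; rewrite /pow2 expr1; lia.
Qed.

Lemma split2 (x : Z2) : exists (e : bool) (y : Z2), x = e%:R + 2 * y.
Proof.
have Hb : forall k, (z2seq x k.+1 %% 2)%Z = z2seq x 1.
  by move=> k; rewrite -(z2seq_chain x 1 k) /pow2 expr1.
exists (z2seq x 1 == 1), (half x); apply: z2_eq => k.
rewrite z2seqD z2seqM !z2seq_nat /= modzMml modzMmr modzDm.
rewrite -[in LHS]z2_compat; congr (_ %% _)%Z.
rewrite [LHS](divz_eq _ 2) Hb /half_f.
case: (z2seq_bit x) => ->; rewrite /=; ring.
Qed.

Definition mx2_def (a b c d : Z2) : 'M[Z2]_2 :=
  \matrix_(i < 2, j < 2) if i == 0 then (if j == 0 then a else b) else (if j == 0 then c else d).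
Fact mx2_key : unit. Proof. by []. Qed.
Definition mx2 := locked_with mx2_key mx2_def.
Lemma mx2_unlock : mx2 = mx2_def. Proof. exact: locked_withE. Qed.

Lemma ord2P (i : 'I_2) : i = 0 \/ i = 1.
Proof. by case: i => [[|[|]]] //= H; [left|right]; apply: val_inj. Qed.

Lemma mx2_eta (A : 'M[Z2]_2) : A = mx2 (A 0 0) (A 0 1) (A 1 0) (A 1 1).
Proof. rewrite !mx2_unlock. by apply/matrixP => i j; rewrite mxE; case: (ord2P i) => ->; case: (ord2P j) => ->. Qed.

Lemma mx2E a b c d : (mx2 a b c d 0 0 = a) * (mx2 a b c d 0 1 = b) * (mx2 a b c d 1 0 = c) * (mx2 a b c d 1 1 = d).
Proof. rewrite !mx2_unlock. by rewrite !mxE. Qed.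

Lemma mx2_mul a b c d a' b' c' d' :
  mx2 a b c d * mx2 a' b' c' d' = mx2 (a*a'+b*c') (a*b'+b*d') (c*a'+d*c') (c*b'+d*d').
Proof. rewrite !mx2_unlock.
apply/matrixP => i j; rewrite !mxE !big_ord_recl !big_ord0 !mxE addr0.
by case: (ord2P i) => ->; case: (ord2P j) => ->.
Qed.

Lemma mx2_add a b c d a' b' c' d' :
  mx2 a b c d + mx2 a' b' c' d' = mx2 (a+a') (b+b') (c+c') (d+d').
Proof. rewrite !mx2_unlock. by apply/matrixP => i j; rewrite !mxE; case: (ord2P i) => ->; case: (ord2P j) => ->. Qed.

Lemma mx2_opp a b c d : - mx2 a b c d = mx2 (-a) (-b) (-c) (-d).
Proof. rewrite !mx2_unlock. by apply/matrixP => i j; rewrite !mxE; case: (ord2P i) => ->; case: (ord2P j) => ->. Qed.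

Lemma mx2_scale k a b c d : k *: mx2 a b c d = mx2 (k*a) (k*b) (k*c) (k*d).
Proof. rewrite !mx2_unlock. by apply/matrixP => i j; rewrite !mxE; case: (ord2P i) => ->; case: (ord2P j) => ->. Qed.

Lemma mx2_one : (1 : 'M[Z2]_2) = mx2 1 0 0 1.
Proof. rewrite !mx2_unlock. by apply/matrixP => i j; rewrite !mxE; case: (ord2P i) => ->; case: (ord2P j) => ->. Qed.

Lemma mx2_zero : (0 : 'M[Z2]_2) = mx2 0 0 0 0.
Proof. rewrite !mx2_unlock. by apply/matrixP => i j; rewrite !mxE; case: (ord2P i) => ->; case: (ord2P j) => ->. Qed.

Lemma mx2_muln a b c d k : mx2 a b c d *+ k = mx2 (a*+k) (b*+k) (c*+k) (d*+k).
Proof. rewrite !mx2_unlock. by apply/matrixP => i j; rewrite mulmxnE !mxE; case: (ord2P i) => ->; case: (ord2P j) => ->. Qed.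

Lemma mx2_muln' a b c d k : mx2 a b c d *+ k = mx2 (a * k%:R) (b * k%:R) (c * k%:R) (d * k%:R).
Proof. by rewrite mx2_muln !mulr_natr. Qed.

Definition det2 (A : 'M[Z2]_2) := A 0 0 * A 1 1 - A 0 1 * A 1 0.
Definition adj2 (A : 'M[Z2]_2) := mx2 (A 1 1) (- A 0 1) (- A 1 0) (A 0 0).

Lemma det2M A B : det2 (A * B) = det2 A * det2 B.
Proof. rewrite /det2 [A]mx2_eta [B]mx2_eta mx2_mul !mx2E; ring. Qed.

Lemma mx2_scalar (x : Z2) : x%:M = mx2 x 0 0 x.
Proof. rewrite !mx2_unlock. by apply/matrixP => i j; rewrite !mxE; case: (ord2P i) => ->; case: (ord2P j) => ->. Qed.

Lemma adj2_mul A : A * adj2 A = (det2 A)%:M /\ adj2 A * A = (det2 A)%:M.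
Proof.
rewrite /adj2 /det2 [A]mx2_eta !mx2E !mx2_mul mx2_scalar.
by split; congr mx2; ring.
Qed.

Lemma mulmx_row2 (v : 'rV[Z2]_2) (s : 'M[Z2]_2) j : (v *m s) 0 j = v 0 0 * s 0 j + v 0 1 * s 1 j.
Proof.
have E0 : (ord0 : 'I_2) = 0 by apply: val_inj.
have E1 : (lift ord0 ord0 : 'I_2) = 1 by apply: val_inj.
by rewrite !mxE !big_ord_recl big_ord0 addr0 E0 E1.
Qed.

Lemma pairing_mul (v w : 'rV[Z2]_2) s : pairing (v *m s) (w *m s) = det2 s * pairing v w.
Proof. rewrite /pairing /det2 !mulmx_row2; ring. Qed.

Lemma Sp_det s : Sp s <-> det2 s = 1.
Proof.
split.
- case=> _ /(_ (delta_mx 0 0) (delta_mx 0 1)); rewrite pairing_mul /pairing !mxE /=.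
  by move=> H; rewrite mul0r mulr1 sub0r mulrN1 in H; apply: oppr_inj.
- move=> H; split; last by move=> v w; rewrite pairing_mul H mul1r.
  have [H1 H2] := adj2_mul s; exists (adj2 s); by rewrite H1 H2 H.
Qed.
Definition Nmx (p q : Z2) := mx2 (-(q * p)) (-(q * q)) (p * p) (p * q).

Lemma transvectionE c : transvection c = 1 + Nmx (toZ2 c 0 0) (toZ2 c 0 1).
Proof.
rewrite mx2_one /Nmx mx2_add !mx2_unlock; apply/matrixP => i j.
rewrite /transvection !mxE /pairing !mxE.
case: (ord2P i) => ->; case: (ord2P j) => -> /=; ring.
Qed.

Lemma Nmx_sq p q : Nmx p q * Nmx p q = 0.
Proof. by rewrite /Nmx mx2_mul mx2_zero; congr mx2; ring. Qed.

Lemma expr1N (R : pzRingType) (N : R) k : N * N = 0 -> (1 + N) ^+ k = 1 + N *+ k.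
Proof.
move=> H; elim: k => [|k IH]; first by rewrite expr0 mulr0n addr0.
rewrite exprS IH mulrDl mul1r mulrDr mulr1 mulrnAr H mul0rn addr0.
by rewrite mulrSr addrA.
Qed.

Ltac mx2simp := repeat progress rewrite ?(mx2_scale _) ?mx2_add ?mx2_mul ?mx2_opp ?mx2_muln' ?mx2E.

Lemma det2_mx2 a b c d : det2 (mx2 a b c d) = a * d - b * c.
Proof. by rewrite /det2 !mx2E. Qed.

Lemma Gamma_sub N : is_subgroup (Gamma N).
Proof.
split.
- by move=> s [].
- split; first by rewrite Sp_det mx2_one det2_mx2 mulr1 mulr0 subr0.
  by exists 0; rewrite scaler0 addr0.
- move=> s t [/Sp_det Hs [a Ea]] [/Sp_det Ht [b Eb]]; split.
    by rewrite Sp_det det2M Hs Ht mulr1.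
  exists (a + b + a * (N%:R *: b)); rewrite Ea Eb.
  rewrite [a]mx2_eta [b]mx2_eta; rewrite mx2_one; mx2simp.
  by congr mx2; ring.
- move=> s t [/Sp_det Hs [a Ea]] Hst.
  have Ht : det2 t = 1.
    by move: (det2M s t); rewrite Hst Hs mul1r mx2_one det2_mx2 => <-; ring.
  have Et : t = adj2 s.
    have [_ H2] := adj2_mul s.
    have H3 : adj2 s * s = 1 by rewrite H2 Hs.
    by rewrite -[t]mul1r -H3 -mulrA Hst mulr1.
  split; first by rewrite Sp_det.
  exists (mx2 (a 1 1) (- a 0 1) (- a 1 0) (a 0 0)); rewrite Et /adj2 Ea.
  rewrite [a]mx2_eta; rewrite mx2_one; mx2simp.
  by congr mx2; ring.
Qed.

Lemma Gamma_closed n : is_closed (Gamma (2 ^ n)).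
Proof.
move=> s H; split; last first.
  have [t [_ [w ->]] [u ->]] := H n.
  by exists (w + u); rewrite scalerDr addrA.
rewrite Sp_det; apply/eqP; rewrite -subr_eq0; apply/eqP; apply: Z0 => k.
have [t [/Sp_det Ht _] [u ->]] := H k.
set E := (2 ^ k)%N%:R; clearbody E.
exists (t 0 0 * u 1 1 + u 0 0 * t 1 1 + E * u 0 0 * u 1 1 - t 0 1 * u 1 0 - u 0 1 * t 1 0 - E * u 0 1 * u 1 0).
rewrite -Ht /det2 [t]mx2_eta [u]mx2_eta; mx2simp; ring.
Qed.

Lemma Gamma_gen n c : Gamma (2 ^ n) (transvection c ^+ (2 ^ n)).
Proof.
rewrite transvectionE expr1N ?Nmx_sq //; split.
  rewrite Sp_det /Nmx mx2_one; mx2simp; rewrite det2_mx2.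
  move: (2 ^ n)%N => K; ring.
by exists (Nmx (toZ2 c 0 0) (toZ2 c 0 1)); rewrite scaler_nat.
Qed.
Lemma toZ2_entry (B m : 'rV[int]_2) j : toZ2 (B + m *+ 2) 0 j = (B 0 j)%:~R + 2 * (m 0 j)%:~R.
Proof. by rewrite /toZ2 !mxE !intrD mulr2n mulrDl mul1r. Qed.
Lemma a1b1E : ((a1 + b1) 0 0 = 1) * ((a1 + b1) 0 1 = 1) * (a1 0 0 = 1) * (a1 0 1 = 0) * (b1 0 0 = 0) * (b1 0 1 = 1).
Proof. by rewrite !mxE. Qed.

Lemma xor_nat (a b : bool) : ((xorb a b : nat)%:R : Z2) = (a : nat)%:R + (b : nat)%:R - 2 * (a : nat)%:R * (b : nat)%:R.
Proof. by case: a; case: b => /=; ring. Qed.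

Lemma subgroup_pow P g K : is_subgroup P -> P g -> P (g ^+ K).
Proof.
case=> _ P1 PM _ Pg; elim: K => [|K IH]; first by rewrite expr0.
by rewrite exprS; apply: PM.
Qed.

Definition Wmx (e0 e1 e2 b2 b3 y0 y1 y2 t r1 s1 r2 s2 r3 s3 : Z2) : 'M[Z2]_2 :=
  mx2 (- e0 - e0 * (s1 + r1 + 2 * s1 * r1) - b2 * r2 * (1 + 2 * s2) - b3 * s3 * (1 + 2 * r3) - y0)
      (- e0 - e1 + e1 * e0 - 2 * e0 * (s1 + s1 * s1) - 2 * b2 * (s2 + s2 * s2) - 2 * b3 * s3 * s3 - y1)
      (e0 - e2 * e0 + 2 * e0 * (r1 + r1 * r1) + 2 * b2 * r2 * r2 + 2 * b3 * (r3 + r3 * r3) - y2)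
      (e0 + e0 * (s1 + r1 + 2 * s1 * r1) + b2 * r2 * (1 + 2 * s2) + b3 * s3 * (1 + 2 * r3) + y0 - t).

Lemma layer (P : 'M[Z2]_2 -> Prop) (HP : is_subgroup P) (n m : nat) r1 s1 r2 s2 r3 s3 :
  P ((1 + Nmx (1 + 2 * r1) (1 + 2 * s1)) ^+ (2 ^ n)%N) ->
  P ((1 + Nmx (0 + 2 * r2) (1 + 2 * s2)) ^+ (2 ^ n)%N) ->
  P ((1 + Nmx (1 + 2 * r3) (0 + 2 * s3)) ^+ (2 ^ n)%N) ->
  (n <= m)%N -> (1 <= m)%N ->
  forall (X : 'M[Z2]_2) t, X 1 1 = - X 0 0 + 2 * t ->
  exists2 h, P h & exists V, h = 1 + (2 ^ m)%N%:R *: X + (2 ^ m.+1)%N%:R *: V.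
Proof.
set N1 := Nmx _ _; set N2 := Nmx _ _; set N3 := Nmx _ _.
move=> P1 P2 P3 hnm hm X t Ht.
have [e0 [y0 E0]] := split2 (X 0 0).
have [e1 [y1 E1]] := split2 (X 0 1).
have [e2 [y2 E2]] := split2 (X 1 0).
set b2 := xorb e1 e0; set b3 := xorb e2 e0.
set K := (2 ^ (m - n))%N.
exists (((1 + N1) ^+ (2 ^ n)%N) ^+ (K * e0) * ((1 + N2) ^+ (2 ^ n)%N) ^+ (K * b2) * ((1 + N3) ^+ (2 ^ n)%N) ^+ (K * b3)).
  have [_ _ PM _] := HP.
  by apply: (PM); [apply: (PM)|]; apply: subgroup_pow.
have EK : forall b : nat, (2 ^ n * (K * b) = 2 ^ m * b)%N.
  by move=> b; rewrite mulnA -expnD subnKC.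
rewrite -!exprM !EK !expr1N ?Nmx_sq //.
clear EK K; case: m hnm hm => [//|m'] _ _.
set F := (2 ^ m')%N.
have EF : (2 ^ m'.+1 = 2 * F)%N by rewrite expnS.
have EF2 : (2 ^ m'.+2 = 2 * (2 * F))%N by rewrite expnS EF.
exists (Wmx (e0%:R) (e1%:R) (e2%:R) (b2%:R) (b3%:R) y0 y1 y2 t r1 s1 r2 s2 r3 s3
   + F%:R *: ((N1 *+ e0) * (N2 *+ b2) + (N1 *+ e0) * (N3 *+ b3) + (N2 *+ b2) * (N3 *+ b3))
   + (2 * F%:R * F%:R) *: ((N1 *+ e0) * (N2 *+ b2) * (N3 *+ b3))).
rewrite EF EF2 [X]mx2_eta Ht E0 E1 E2 /N1 /N2 /N3 /Nmx /Wmx mx2_one.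
mx2simp.
rewrite !natrM /b2 /b3 !xor_nat.
move: (F%:R) => f.
congr mx2; ring.
Qed.

Lemma det2_adj A : det2 (adj2 A) = det2 A.
Proof. by rewrite /adj2 det2_mx2 /det2; ring. Qed.

Lemma approx (P : 'M[Z2]_2 -> Prop) (HP : is_subgroup P) (n : nat) r1 s1 r2 s2 r3 s3 :
  P ((1 + Nmx (1 + 2 * r1) (1 + 2 * s1)) ^+ (2 ^ n)%N) ->
  P ((1 + Nmx (0 + 2 * r2) (1 + 2 * s2)) ^+ (2 ^ n)%N) ->
  P ((1 + Nmx (1 + 2 * r3) (0 + 2 * s3)) ^+ (2 ^ n)%N) ->
  (1 <= n)%N ->
  forall j s, Gamma (2 ^ n) s -> exists2 t, P t & congr_mx (2 ^ (n + j)) s t.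
Proof.
move=> P1 P2 P3 hn j; elim: j => [|j IH] s Gs.
  have [_ P1' _ _] := HP.
  by exists 1 => //; rewrite addn0; case: Gs.
have [t Pt [u Eu]] := IH s Gs.
have [SpP _ PM _] := HP.
have /Sp_det Ht := SpP t Pt.
have [/Sp_det Hs _] := Gs.
set m := (n + j)%N in Eu.
set t' := adj2 t.
have [Htt' Ht't] := adj2_mul t; rewrite -/t' Ht in Htt' Ht't.
set X := t' * u.
set E := (2 ^ m)%N%:R in Eu.
have Er : t' * s = 1 + E *: X by rewrite Eu mulrDr Ht't scalerAr.
have Hr : det2 (1 + E *: X) = 1 by rewrite -Er det2M det2_adj Ht Hs mulr1.
have key : E * (X 0 0 + X 1 1 + E * det2 X) = 0.
  transitivity (det2 (1 + E *: X) - 1); last by rewrite Hr subrr.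
  rewrite /det2 [X]mx2_eta mx2_one; mx2simp; ring.
have {}key : X 0 0 + X 1 1 + E * det2 X = 0.
  by apply: (@cancel2X m); rewrite -key /E natrX.
have hm : (1 <= m)%N by rewrite /m (leq_trans hn) ?leq_addr.
have [E' EE'] : exists E', E = 2 * E'.
  exists (2 ^ m.-1)%N%:R; rewrite /E -natrM -expnS prednK //.
have Htr : X 1 1 = - X 0 0 + 2 * (- (E' * det2 X)).
  by apply/eqP; rewrite -subr_eq0 -key EE'; apply/eqP; ring.
have [h Ph [V Eh]] := @layer P HP n m _ _ _ _ _ _ P1 P2 P3 (leq_addr j n) hm X _ Htr.
exists (t * h); first exact: PM.
exists (- (t * V)).
have Htt1 : t * t' = 1 by rewrite Htt'.
rewrite addnS -/m Eh !mulrDr mulr1 -!scalerAr /X mulrA Htt1 mul1r -Eu.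
by rewrite scalerN addrK.
Qed.

Theorem proposition3p3 (c1 c2 c3 : 'rV[int]_2) (n : nat) :
  (exists m : 'rV[int]_2, c1 = a1 + b1 + m *+ 2) ->
  (exists m : 'rV[int]_2, c2 = b1 + m *+ 2) ->
  (exists m : 'rV[int]_2, c3 = a1 + m *+ 2) ->
  (1 <= n)%N ->
  forall s : 'M[Z2]_2,
    top_generated
      (fun t => t = transvection c1 ^+ (2 ^ n) \/
                t = transvection c2 ^+ (2 ^ n) \/
                t = transvection c3 ^+ (2 ^ n)) s
    <-> Gamma (2 ^ n) s.
Proof.
move=> [m1 E1] [m2 E2] [m3 E3] hn s; split.
  move=> H; apply: H; [exact: Gamma_sub | exact: Gamma_closed | ].
  by move=> t [->|[->|->]]; exact: Gamma_gen.
move=> Gs P HP HC Hg; apply: HC => k.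
have G1 : P ((1 + Nmx (1 + 2 * (m1 0 0)%:~R) (1 + 2 * (m1 0 1)%:~R)) ^+ (2 ^ n)%N).
  by have := Hg _ (or_introl erefl); rewrite transvectionE E1 !toZ2_entry !a1b1E.
have G2 : P ((1 + Nmx (0 + 2 * (m2 0 0)%:~R) (1 + 2 * (m2 0 1)%:~R)) ^+ (2 ^ n)%N).
  by have := Hg _ (or_intror (or_introl erefl)); rewrite transvectionE E2 !toZ2_entry !a1b1E.
have G3 : P ((1 + Nmx (1 + 2 * (m3 0 0)%:~R) (0 + 2 * (m3 0 1)%:~R)) ^+ (2 ^ n)%N).
  by have := Hg _ (or_intror (or_intror erefl)); rewrite transvectionE E3 !toZ2_entry !a1b1E.
have [t Pt [u Eu]] := @approx P HP n _ _ _ _ _ _ G1 G2 G3 hn k s Gs.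
exists t => //; exists ((2 ^ n)%N%:R *: u).
by rewrite Eu scalerA -natrM -expnD addnC.
Qed.
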